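(* For every $r\ge3$, \[K_{A_r}(2\tilde\alpha_{A_r})=K_{C_r}(\tilde\alpha_{C_r}),\] where $2\tilde\alpha_{A_r}=2\varepsilon_1-2\varepsilon_{r+1}\in\mathbb{R}^{r+1}$ and $\tilde\alpha_{C_r}=2\varepsilon_1\in\mathbb{R}^r$.
   Context: $\Phi^+_{A_r}=\{\varepsilon_i-\varepsilon_j:1\le i<j\le r+1\}\subset\mathbb{R}^{r+1}$ and $\Phi^+_{C_r}=\{\varepsilon_i\pm\varepsilon_j:1\le i<j\le r\}\cup\{2\varepsilon_i:1\le i\le r\}\subset\mathbb{R}^r$. For a root system $X$, $K_X(\mu)$ is the number of finite multisets of elements of $\Phi^+_X$ summing to $\mu$. *)

(* Defs.v *)
From HB Require Import structures.
From mathcomp Require Import all_boot all_order all_algebra.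
Set Implicit Arguments. Unset Strict Implicit. Unset Printing Implicit Defensive.
Import Order.TTheory GRing.Theory Num.Theory.
Local Open Scope ring_scope.

(* Vectors of Z^n (all roots and weights involved have integer coordinates,
   so working in Z^n instead of R^n is harmless). *)
Definition vec (n : nat) := 'rV[int]_n.

(* standard basis vector epsilon_i (0-indexed) *)
Definition eps (n : nat) (i : 'I_n) : vec n := delta_mx 0 i.

Definition PhiA (r : nat) : seq (vec r.+1) :=
  [seq eps i - eps j | i : 'I_r.+1 <- enum 'I_r.+1, j : 'I_r.+1 <- [seq j : 'I_r.+1 <- enum 'I_r.+1 | (i < j)%N]].

Definition PhiC (r : nat) : seq (vec r) :=
  [seq eps i - eps j | i : 'I_r <- enum 'I_r, j : 'I_r <- [seq j : 'I_r <- enum 'I_r | (i < j)%N]] ++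
  [seq eps i + eps j | i : 'I_r <- enum 'I_r, j : 'I_r <- [seq j : 'I_r <- enum 'I_r | (i < j)%N]] ++
  [seq 2%:Z *: eps i | i : 'I_r <- enum 'I_r].

Definition has_card (T : Type) (P : T -> Prop) (n : nat) : Prop :=
  exists f : 'I_n -> T, injective f /\ (forall x, P x <-> exists i, f i = x).

(* Finite multisets of elements of the (duplicate-free) list of roots Phi are
   multiplicity functions m on the positions of Phi; such a multiset sums to mu
   iff \sum_i m_i Phi_i = mu. *)
Definition Kostant_is (n : nat) (Phi : seq (vec n)) (mu : vec n) (k : nat) : Prop :=
  has_card (fun m : {ffun 'I_(size Phi) -> nat} =>
              \sum_(i < size Phi) (m i)%:Z *: Phi`_i = mu) k.

Definition twoHighA (r : nat) : vec r.+1 :=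
  2%:Z *: eps (@ord0 r) - 2%:Z *: eps (@ord_max r).

(* highest root of C_r: 2 eps_1 (for r >= 1; the value for r = 0 is irrelevant) *)
Definition highC (r : nat) : vec r :=
  match r return vec r with
  | 0 => 0
  | r'.+1 => 2%:Z *: eps (@ord0 r')
  end.

(* Main.v *)
Require Import Defs.
From HB Require Import structures.
From mathcomp Require Import all_boot all_order all_algebra.
From mathcomp Require Import zify.
Set Implicit Arguments. Unset Strict Implicit. Unset Printing Implicit Defensive.
Import Order.TTheory GRing.Theory Num.Theory.

Lemma sum_ind r (C : pred 'I_r) (b : 'I_r) :
  (\sum_(j < r | C j) (j == b : nat) = C b)%N.
Proof.
case Cb: (C b).
  rewrite (bigD1 b) //= eqxx big1 ?addn0 // => j /andP [_ /negbTE ->] //.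
by rewrite big1 // => j Cj; case: eqP => // e; rewrite -e Cj in Cb.
Qed.

Lemma L0 r (a b : 'I_r) (F : 'I_r -> 'I_r -> nat) : (a < b)%N ->
  (forall i j : 'I_r, (i < j)%N -> F i j = ((i == a) && (j == b) : nat)) ->
  forall k : 'I_r, (\sum_(j < r | (k < j)%N) F k j + \sum_(i < r | (i < k)%N) F i k
             = (k == a) + (k == b))%N.
Proof.
move=> hab hF k.
rewrite (eq_bigr (fun j => ((k == a) && (j == b) : nat))); last by move=> j; apply: hF.
rewrite [X in (_ + X)%N](eq_bigr (fun i => ((i == a) && (k == b) : nat))); last by move=> i; apply: hF.
case: (k =P a) => [->|ka] /=.
  have ab : (a == b) = false by apply/negbTE; rewrite neq_ltn hab.
  by rewrite sum_ind hab ab big1 // => i _; rewrite andbF.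
rewrite big1 ?add0n //; case: (k =P b) => [->|kb] /=.
  by under eq_bigr => i _ do rewrite andbT; rewrite sum_ind hab.
by rewrite big1 // => i _; rewrite andbF.
Qed.

Lemma L1 r (a b : 'I_r) : (a < b)%N -> forall i j : 'I_r, (i < j)%N ->
  ((i == a) || (i == b)) && ((j == a) || (j == b)) = (i == a) && (j == b).
Proof.
move=> hab i j hij.
case: (i =P a) => [ia|ia]; case: (i =P b) => [ib|ib]; case: (j =P a) => [ja|ja];
  case: (j =P b) => [jb|jb] //=; subst; lia.
Qed.

Lemma S2 r (P : 'I_r -> nat) : (\sum_(k < r) P k = 2)%N ->
  (exists a, forall k, P k = 2 * (k == a))%N \/
  (exists a b : 'I_r, (a < b)%N /\ forall k, P k = (k == a) + (k == b))%N.
Proof.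
move=> E.
case: (pickP (fun a => 0 < P a)%N) => [a Pa|P0]; last first.
  by move: E; rewrite big1 // => k _; move: (P0 k) => /= /negbT; rewrite lt0n negbK => /eqP.
move: E; rewrite (bigD1 a) //= => E.
have : (P a == 2) || (P a == 1) by lia.
case/orP => /eqP Pa'.
- left; exists a => k.
  have R0 : (\sum_(i < r | i != a) P i == 0)%N by rewrite Pa' in E; rewrite -(eqn_add2l 2) E.
  move: R0; rewrite sum_nat_eq0 => /forallP R0.
  case: (k =P a) => [->|ka]; first by rewrite Pa'.
  by have := R0 k; rewrite /= muln0; move/implyP; move/(_ (introN eqP ka)) => /eqP.
- have R1 : (\sum_(i < r | i != a) P i == 1)%N by rewrite Pa' in E; rewrite -(eqn_add2l 1) E.
  case/sum_nat_eq1: R1 => b [ba Pb Pj].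
  have PE : forall k, P k = ((k == a) + (k == b))%N.
    move=> k; case: (k =P a) => [->|ka]; first by rewrite Pa' eq_sym (negbTE ba).
    case: (k =P b) => [->|kb]; first by rewrite Pb.
    by apply: Pj; apply/eqP.
  right; case: (ltngtP a b) => [ab|ba'|ab].
  + by exists a, b.
  + by exists b, a; split=> // k; rewrite PE addnC.
  + by move: ba; rewrite eq_sym -val_eqE /= ab eqxx.
Qed.

Definition qP r (P : 'I_r -> nat) (k : 'I_r) : nat :=
  (2 * (P k == 2) + (\sum_(j < r | (k < j)%N) ((P k == 1) && (P j == 1) : nat)
                    + \sum_(i < r | (i < k)%N) ((P i == 1) && (P k == 1) : nat)))%N.

Lemma K1 r (P : 'I_r -> nat) : (\sum_(k < r) P k = 2)%N -> forall k, qP P k = P k.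
Proof.
move=> /S2 [[a Pa]|[a [b [ab Pab]]]] k; rewrite /qP.
- have P1 : forall i, (P i == 1) = false by move=> i; rewrite Pa; case: (i == a).
  rewrite !big1 ?addn0; first by rewrite Pa; case: (k == a).
  + by move=> i _; rewrite P1.
  + by move=> i _; rewrite P1.
- have P1 : forall i, (P i == 1) = (i == a) || (i == b).
    by move=> i; rewrite Pab; case: (i =P a) => ia; case: (i =P b) => ib //=; subst; rewrite ltnn in ab.
  have P2 : (P k == 2) = false.
    by rewrite Pab; case: (k =P a) => ia; case: (k =P b) => ib //=; subst; rewrite ltnn in ab.
  rewrite P2 muln0 add0n (L0 (F := fun i j => ((P i == 1) && (P j == 1) : nat)) ab) ?Pab //.
  by move=> i j hij; rewrite !P1 L1.
Qed.

Lemma K2 r (D : 'I_r -> nat) (Q : 'I_r -> 'I_r -> nat) :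
  let q k := (2 * D k + (\sum_(j < r | (k < j)%N) Q k j + \sum_(i < r | (i < k)%N) Q i k))%N in
  (\sum_(k < r) q k = 2)%N ->
  (forall i j : 'I_r, (i < j)%N -> ((q i == 1) && (q j == 1) : nat) = Q i j) /\
  (forall i, ((q i == 2) : nat) = D i).
Proof.
move=> q E.
have SQ : (\sum_(k < r) q k = 2 * (\sum_(k < r) D k + \sum_(k < r) \sum_(j < r | (k < j)%N) Q k j))%N.
  have e1 : (\sum_(k < r) q k = \sum_(k < r) 2 * D k + (\sum_(k < r) \sum_(j < r | (k < j)%N) Q k j
      + \sum_(k < r) \sum_(i < r | (i < k)%N) Q i k))%N by rewrite /q !big_split.
  have e2 : (\sum_(k < r) 2 * D k = 2 * \sum_(k < r) D k)%N by rewrite big_distrr.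
  have e3 : (\sum_(k < r) \sum_(i < r | (i < k)%N) Q i k = \sum_(k < r) \sum_(j < r | (k < j)%N) Q k j)%N.
    by rewrite (exchange_big_dep xpredT).
  rewrite e1 e2 e3; lia.
move: E; rewrite SQ => E.
have E1 : (\sum_(k < r) D k + \sum_(k < r) \sum_(j < r | (k < j)%N) Q k j = 1)%N by lia.
have : ((\sum_(k < r) D k == 1) && (\sum_(k < r) \sum_(j < r | (k < j)%N) Q k j == 0)) ||
       ((\sum_(k < r) D k == 0) && (\sum_(k < r) \sum_(j < r | (k < j)%N) Q k j == 1)) by lia.
case/orP => /andP [SD SQ'].
- case/sum_nat_eq1: SD => a [_ Da D0].
  have Q0 : forall i j : 'I_r, (i < j)%N -> Q i j = 0%N.
    move=> i j hij; move: SQ'; rewrite sum_nat_eq0 => /forallP /(_ i) /= /eqP.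
    by move/eqP; rewrite sum_nat_eq0 => /forallP /(_ j) /implyP /(_ hij) /eqP.
  have DE : forall k, D k = (k == a) :> nat.
    by move=> k; case: (k =P a) => [->|/eqP ka]; [rewrite Da | rewrite D0].
  have qE : forall k, q k = (2 * (k == a))%N.
    move=> k; rewrite /q DE !big1 ?addn0 //.
    + by move=> i hi; rewrite Q0.
    + by move=> i hi; rewrite Q0.
  split.
  + by move=> i j hij; rewrite !qE Q0 //; case: (i == a).
  + by move=> i; rewrite qE DE; case: (i == a).
- have D0 : forall k, D k = 0%N.
    by move=> k; move: SD; rewrite sum_nat_eq0 => /forallP /(_ k) /eqP.
  rewrite pair_big_dep /= in SQ'.
  case/sum_nat_eq1: SQ' => [[a b]] [/= ab Qab Q0].
  have QE : forall i j : 'I_r, (i < j)%N -> Q i j = ((i == a) && (j == b) : nat).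
    move=> i j hij; case: (i =P a) => ia; case: (j =P b) => jb /=.
    + by subst; rewrite Qab.
    + by apply: (Q0 (i, j)) => //; apply/eqP; case=> _ e; exact: jb e.
    + by apply: (Q0 (i, j)) => //; apply/eqP; case=> e _; exact: ia e.
    + by apply: (Q0 (i, j)) => //; apply/eqP; case=> e _; exact: ia e.
  have qE : forall k, q k = ((k == a) + (k == b))%N.
    by move=> k; rewrite /q D0 muln0 add0n (L0 ab QE).
  split.
  + move=> i j hij; rewrite !qE QE //.
    have P1 : forall i, (((i == a) + (i == b))%N == 1%N) = (i == a) || (i == b).
      by move=> i'; case: (i' =P a) => ia; case: (i' =P b) => ib //=; subst; rewrite ltnn in ab.
    by rewrite !P1 L1.
  + by move=> i; rewrite qE D0; case: (i =P a) => ia; case: (i =P b) => ib //=; subst; rewrite ltnn in ab.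
Qed.

Local Open Scope ring_scope.

Lemma has_card_transfer (T U : Type) (P : T -> Prop) (Q : U -> Prop) k
  (f : T -> U) (g : U -> T) :
  has_card P k ->
  (forall x, P x -> Q (f x)) -> (forall y, Q y -> P (g y)) ->
  (forall x, P x -> g (f x) = x) -> (forall y, Q y -> f (g y) = y) ->
  has_card Q k.
Proof.
move=> [e [ie He]] PQ QP gf fg; exists (fun i => f (e i)); split.
- move=> i j E; apply: ie.
  have Pi : P (e i) by apply/He; exists i.
  have Pj : P (e j) by apply/He; exists j.
  by rewrite -(gf _ Pi) -(gf _ Pj) E.
- move=> y; split.
  + move=> Qy; have /He [i Ei] := QP _ Qy; exists i; by rewrite Ei fg.
  + by case=> i <-; apply: PQ; apply/He; exists i.
Qed.

Lemma fin_bound n (Phi : seq (vec n)) mu B :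
  (forall m : {ffun 'I_(size Phi) -> nat},
     \sum_(i < size Phi) (m i)%:Z *: Phi`_i = mu -> forall i, (m i < B)%N) ->
  exists k, Kostant_is Phi mu k.
Proof.
move=> hb.
set S := [set m : {ffun 'I_(size Phi) -> 'I_B} |
            \sum_(i < size Phi) (val (m i))%:Z *: Phi`_i == mu].
exists #|S|.
pose emb (m : {ffun 'I_(size Phi) -> 'I_B}) : {ffun 'I_(size Phi) -> nat} :=
  [ffun i => val (m i)].
exists (fun i => emb (enum_val i)); split.
- move=> i j /ffunP E; apply: enum_val_inj; apply/ffunP => p; apply: val_inj.
  by have := E p; rewrite !ffunE.
- move=> m; split.
  + move=> Hm.
    pose m' : {ffun 'I_(size Phi) -> 'I_B} := [ffun p => Ordinal (hb m Hm p)].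
    have Sm' : m' \in S.
      rewrite inE; apply/eqP; rewrite -Hm; apply: eq_bigr => p _.
      by rewrite ffunE.
    exists (enum_rank_in Sm' m'); rewrite enum_rankK_in //.
    by apply/ffunP => p; rewrite !ffunE.
  + case=> i <-; have := enum_valP i; rewrite inE => /eqP <-.
    by apply: eq_bigr => p _; rewrite ffunE.
Qed.

Definition rd n (X : eqType) (cs : seq X) (Phi : seq (vec n))
   (m : {ffun 'I_(size Phi) -> nat}) (x : X) : nat :=
  if insub (index x cs) is Some p then m p else 0%N.

Lemma rd_nth n (X : eqType) (x0 : X) (H : X -> vec n) cs Phi :
  Phi = map H cs -> uniq cs ->
  forall (m : {ffun 'I_(size Phi) -> nat}) (p : 'I_(size Phi)), rd cs m (nth x0 cs p) = m p.
Proof.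
move=> eP ucs m p.
have hp : (p < size cs)%N by rewrite -(size_map H) -eP ltn_ord.
rewrite /rd index_uniq //; case: insubP => [q _ /val_inj -> //|].
by rewrite ltn_ord.
Qed.

Lemma rd_ffun n (X : eqType) (x0 : X) (H : X -> vec n) cs Phi :
  Phi = map H cs ->
  forall (G : X -> nat) x, x \in cs ->
  rd cs ([ffun p : 'I_(size Phi) => G (nth x0 cs p)]) x = G x.
Proof.
move=> eP G x xin; rewrite /rd; case: insubP => [q _ eq|].
  by rewrite ffunE eq nth_index.
by rewrite eP size_map index_mem xin.
Qed.

Lemma rd_ext n (X : eqType) (x0 : X) (H : X -> vec n) cs Phi :
  Phi = map H cs -> uniq cs ->
  forall m1 m2 : {ffun 'I_(size Phi) -> nat},
  (forall x, x \in cs -> rd cs m1 x = rd cs m2 x) -> m1 = m2.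
Proof.
move=> eP ucs m1 m2 E; apply/ffunP => p.
rewrite -(rd_nth x0 eP ucs) -(rd_nth x0 eP ucs); apply: E; apply: mem_nth.
by rewrite -(size_map H) -eP ltn_ord.
Qed.

Lemma sum_rd n (X : eqType) (x0 : X) (H : X -> vec n) cs Phi :
  Phi = map H cs -> uniq cs ->
  forall m : {ffun 'I_(size Phi) -> nat},
  \sum_(p < size Phi) (m p)%:Z *: Phi`_p =
  \sum_(x <- cs) (rd cs m x)%:Z *: H x.
Proof.
move=> eP ucs m.
have sz : size Phi = size cs by rewrite eP size_map.
rewrite (big_nth x0) big_mkord.
transitivity (\sum_(p < size Phi)
   (rd cs m (nth x0 cs p))%:Z *: H (nth x0 cs p)).
  have e : forall q : nat, (q < size cs)%N -> nth 0 Phi q = H (nth x0 cs q).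
    by move=> q hq; rewrite eP (nth_map x0).
  apply: eq_bigr => p _; rewrite (rd_nth x0 eP ucs).
  by rewrite e // -sz ltn_ord.
rewrite -(big_mkord xpredT (fun p => (rd cs m (nth x0 cs p))%:Z *: H (nth x0 cs p))).
by rewrite sz big_mkord.
Qed.

Definition csA r : seq ('I_r.+1 * 'I_r.+1) :=
  [seq (i, j) | i : 'I_r.+1 <- enum 'I_r.+1, j : 'I_r.+1 <- [seq j : 'I_r.+1 <- enum 'I_r.+1 | (i < j)%N]].
Definition HA r (x : 'I_r.+1 * 'I_r.+1) : vec r.+1 := eps x.1 - eps x.2.

Definition csC r : seq (nat * 'I_r * 'I_r) :=
  [seq (0%N, i, j) | i : 'I_r <- enum 'I_r, j : 'I_r <- [seq j : 'I_r <- enum 'I_r | (i < j)%N]] ++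
  [seq (1%N, i, j) | i : 'I_r <- enum 'I_r, j : 'I_r <- [seq j : 'I_r <- enum 'I_r | (i < j)%N]] ++
  [seq (2%N, i, i) | i : 'I_r <- enum 'I_r].
Definition HC r (x : nat * 'I_r * 'I_r) : vec r :=
  let: (t, i, j) := x in
  if t == 0%N then eps i - eps j else if t == 1%N then eps i + eps j else 2%:Z *: eps i.

Lemma map_allpairs_dep (S : Type) (T : S -> Type) (R R' : Type)
  (f : forall x, T x -> R) (h : R -> R') s t :
  map h (allpairs_dep f s t) = allpairs_dep (fun x y => h (f x y)) s t.
Proof. by elim: s => //= x s IH; rewrite map_cat IH -map_comp. Qed.

Lemma PhiA_map r : PhiA r = map (@HA r) (csA r).
Proof. by rewrite /PhiA /csA map_allpairs_dep. Qed.

Lemma PhiC_map r : PhiC r = map (@HC r) (csC r).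
Proof. by rewrite /PhiC /csC !map_cat !map_allpairs_dep -map_comp. Qed.

Lemma uniq_pairs (T : finType) (V : eqType) (P : T -> T -> bool) (f : T -> T -> V) :
  (forall a b c d, f a b = f c d -> a = c /\ b = d) ->
  uniq [seq f i j | i : T <- enum T, j : T <- [seq j : T <- enum T | P i j]].
Proof.
move=> finj; apply: allpairs_uniq_dep.
- exact: enum_uniq.
- by move=> x _; apply: filter_uniq; apply: enum_uniq.
- move=> [a b] [c d] _ _ /= /finj [e1 e2]; subst; done.
Qed.

Lemma uniq_csA r : uniq (csA r).
Proof. by apply: uniq_pairs => a b c d [-> ->]. Qed.

Lemma uniq_csC r : uniq (csC r).
Proof.
rewrite /csC cat_uniq; apply/and3P; split.
- by apply: uniq_pairs => a b c d [-> ->].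
- apply/hasPn => x; rewrite mem_cat => /orP [] H; apply/negP => /allpairsPdep [k [l [_ _ E]]];
  move: H; rewrite E.
  + by move/allpairsPdep => [i [j [_ _ []]]].
  + by move/mapP => [i _ []].
rewrite cat_uniq; apply/and3P; split.
- by apply: uniq_pairs => a b c d [-> ->].
- by apply/hasPn => x /mapP [i _ ->]; apply/negP => /allpairsPdep [k [l [_ _ []]]].
- rewrite map_inj_uniq ?enum_uniq // => a b [->] //.
Qed.

Lemma mem_csA r (i j : 'I_r.+1) : ((i, j) \in csA r) = (i < j)%N.
Proof.
apply/allpairsPdep/idP => [[k [l [_]]]|h].
  by rewrite mem_filter => /andP [h _] [-> ->].
by exists i, j; split=> //; [exact: mem_enum | rewrite mem_filter h andTb; exact: mem_enum].
Qed.

Lemma mem_csC0 r (i j : 'I_r) : (i < j)%N -> (0%N, i, j) \in csC r.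
Proof. by move=> h; rewrite mem_cat; apply/orP; left; apply/allpairsPdep; exists i, j; split=> //; [exact: mem_enum | rewrite mem_filter h andTb; exact: mem_enum]. Qed.
Lemma mem_csC1 r (i j : 'I_r) : (i < j)%N -> (1%N, i, j) \in csC r.
Proof. by move=> h; rewrite !mem_cat; apply/orP; right; apply/orP; left; apply/allpairsPdep; exists i, j; split=> //; [exact: mem_enum | rewrite mem_filter h andTb; exact: mem_enum]. Qed.
Lemma mem_csC2 r (i : 'I_r) : (2%N, i, i) \in csC r.
Proof. by rewrite !mem_cat; apply/orP; right; apply/orP; right; apply/mapP; exists i; rewrite ?mem_enum. Qed.

Lemma mem_csCP r x : x \in csC r ->
  [\/ exists i j : 'I_r, [/\ (i < j)%N & x = (0%N, i, j)],
      exists i j : 'I_r, [/\ (i < j)%N & x = (1%N, i, j)] |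
      exists i : 'I_r, x = (2%N, i, i)].
Proof.
rewrite !mem_cat => /or3P [] .
- by move/allpairsPdep => [i [j [_]]]; rewrite mem_filter => /andP [h _] ->; apply: Or31; exists i, j.
- by move/allpairsPdep => [i [j [_]]]; rewrite mem_filter => /andP [h _] ->; apply: Or32; exists i, j.
- by move/mapP => [i _ ->]; apply: Or33; exists i.
Qed.

Lemma sum_csA r (V : nmodType) (F : 'I_r.+1 * 'I_r.+1 -> V) :
  \sum_(x <- csA r) F x = \sum_(i < r.+1) \sum_(j < r.+1 | (i < j)%N) F (i, j).
Proof.
rewrite big_allpairs_dep big_enum /=; apply: eq_bigr => i _.
by rewrite big_filter big_enum_cond.
Qed.

Lemma sum_csC r (V : nmodType) (F : nat * 'I_r * 'I_r -> V) :
  \sum_(x <- csC r) F x =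
    \sum_(i < r) \sum_(j < r | (i < j)%N) F (0%N, i, j) +
   (\sum_(i < r) \sum_(j < r | (i < j)%N) F (1%N, i, j) +
    \sum_(i < r) F (2%N, i, i)).
Proof.
rewrite !big_cat !big_allpairs_dep big_map !big_enum /=; congr (_ + (_ + _));
by apply: eq_bigr => i _; rewrite big_filter big_enum_cond.
Qed.

Lemma eps_coord n (i k : 'I_n) : (eps i) 0 k = (i == k)%:R.
Proof. by rewrite /eps mxE eqxx eq_sym. Qed.

Lemma sum_diag n (P : pred 'I_n) (c : 'I_n -> int) k :
  \sum_(i < n | P i) c i * (k == i)%:R = if P k then c k else 0.
Proof.
case: ifP => Pk.
  rewrite (bigD1 k) //= eqxx mulr1 big1 ?addr0 // => i /andP [_ ]; rewrite eq_sym => /negbTE ->.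
  by rewrite mulr0.
by rewrite big1 // => i Pi; case: eqP => [e|]; [rewrite -e Pk in Pi | rewrite mulr0].
Qed.

Lemma coord_minus n (c : 'I_n -> 'I_n -> int) k :
  (\sum_(i < n) \sum_(j < n | (i < j)%N) c i j *: (eps i - eps j)) 0 k =
  \sum_(j < n | (k < j)%N) c k j - \sum_(i < n | (i < k)%N) c i k.
Proof.
rewrite summxE; under eq_bigr => i _ do rewrite summxE.
under eq_bigr => i _ do under eq_bigr => j _ do rewrite !mxE eqxx !andTb mulrBr.
under eq_bigr => i _ do rewrite sumrB.
rewrite sumrB; congr (_ - _).
  transitivity (\sum_(i < n) (\sum_(j < n | (i < j)%N) c i j) * (k == i)%:R).
    by apply: eq_bigr => i _; rewrite mulr_suml.
  by rewrite sum_diag.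
rewrite (exchange_big_dep xpredT) //=.
transitivity (\sum_(j < n) (\sum_(i < n | (i < j)%N) c i j) * (k == j)%:R).
  by apply: eq_bigr => i _; rewrite mulr_suml.
by rewrite sum_diag.
Qed.

Lemma coord_plus n (c : 'I_n -> 'I_n -> int) k :
  (\sum_(i < n) \sum_(j < n | (i < j)%N) c i j *: (eps i + eps j)) 0 k =
  \sum_(j < n | (k < j)%N) c k j + \sum_(i < n | (i < k)%N) c i k.
Proof.
rewrite summxE; under eq_bigr => i _ do rewrite summxE.
under eq_bigr => i _ do under eq_bigr => j _ do rewrite !mxE eqxx !andTb mulrDr.
under eq_bigr => i _ do rewrite big_split.
rewrite big_split; congr (_ + _).
  transitivity (\sum_(i < n) (\sum_(j < n | (i < j)%N) c i j) * (k == i)%:R).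
    by apply: eq_bigr => i _; rewrite mulr_suml.
  by rewrite sum_diag.
rewrite (exchange_big_dep xpredT) //=.
transitivity (\sum_(j < n) (\sum_(i < n | (i < j)%N) c i j) * (k == j)%:R).
  by apply: eq_bigr => i _; rewrite mulr_suml.
by rewrite sum_diag.
Qed.

Lemma coord_dbl n (d : 'I_n -> int) k :
  (\sum_(i < n) d i *: (2%:Z *: eps i)) 0 k = 2 * d k.
Proof.
rewrite summxE; under eq_bigr => i _ do rewrite !mxE eqxx !andTb mulrA [d i * _]mulrC -mulrA.
by rewrite -mulr_sumr sum_diag.
Qed.

Lemma sumz (I : Type) (s : seq I) (P : pred I) (F : I -> nat) :
  ((\sum_(i <- s | P i) F i)%N)%:Z = \sum_(i <- s | P i) (F i)%:Z.
Proof. exact: (big_morph Posz PoszD (erefl 0%:Z)). Qed.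

Notation W := (lift ord_max).

Lemma val_W r (i : 'I_r) : nat_of_ord (W i) = nat_of_ord i.
Proof. exact: lift_max. Qed.

Lemma bumpW r (i : 'I_r) : bump r i = i.
Proof. by rewrite /bump leqNgt ltn_ord. Qed.

Lemma sum_split r (F : 'I_r.+1 -> int) (P : pred 'I_r.+1) :
  \sum_(j < r.+1 | P j) F j =
  \sum_(j < r | P (W j)) F (W j) + (if P ord_max then F ord_max else 0).
Proof.
rewrite big_mkcond big_ord_recr /= [in RHS]big_mkcond; congr (_ + _).
apply: eq_bigr => j _.
by have -> : widen_ord (leqnSn r) j = W j by apply: val_inj; rewrite /= bumpW.
Qed.

Definition EqA r (M : 'I_r.+1 * 'I_r.+1 -> nat) : Prop :=
  (forall k : 'I_r,
    \sum_(j < r | (k < j)%N) (M (W k, W j))%:Z - \sum_(i < r | (i < k)%N) (M (W i, W k))%:Z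
      + (M (W k, ord_max))%:Z = (if val k == 0%N then 2 else 0)) /\
  (\sum_(k < r) M (W k, ord_max) = 2)%N.

Lemma SA_coord r (M : 'I_r.+1 * 'I_r.+1 -> nat) : (0 < r)%N ->
  (\sum_(i < r.+1) \sum_(j < r.+1 | (i < j)%N) (M (i, j))%:Z *: (eps i - eps j) = twoHighA r)
  <-> EqA M.
Proof.
move=> r0.
have ct : forall k, twoHighA r 0 k = 2 * (k == ord0)%:R - 2 * (k == ord_max)%:R.
  by move=> k; rewrite /twoHighA !mxE eqxx /=.
have cW : forall k : 'I_r, (\sum_(i < r.+1) \sum_(j < r.+1 | (i < j)%N) (M (i, j))%:Z *: (eps i - eps j)) 0 (W k) =
   \sum_(j < r | (k < j)%N) (M (W k, W j))%:Z - \sum_(i < r | (i < k)%N) (M (W i, W k))%:Z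
      + (M (W k, ord_max))%:Z.
  move=> k; rewrite coord_minus !sum_split /= bumpW ltn_ord.
  under eq_bigl => j do rewrite bumpW.
  under [X in _ - (X + _)]eq_bigl => j do rewrite bumpW.
  by rewrite ltnNge (ltnW (ltn_ord k)) /= addr0 addrAC.
have cM : (\sum_(i < r.+1) \sum_(j < r.+1 | (i < j)%N) (M (i, j))%:Z *: (eps i - eps j)) 0 ord_max =
   - ((\sum_(k < r) M (W k, ord_max))%N)%:Z.
  rewrite coord_minus !sum_split /= ltnn addr0 big1 ?sub0r ?sumz //.
    by rewrite addr0; under eq_bigl => j do rewrite bumpW ltn_ord.
  by move=> j; rewrite bumpW ltnNge ltnW.
have tW : forall k : 'I_r, twoHighA r 0 (W k) = if val k == 0%N then 2 else 0.
  move=> k; rewrite ct.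
  have -> : (W k == ord_max) = false by apply/negbTE; rewrite -val_eqE /= ?val_W ?bumpW neq_ltn ltn_ord.
  have -> : (W k == ord0) = (val k == 0%N) by rewrite -val_eqE /= ?val_W ?bumpW.
  by case: (val k == 0%N); rewrite ?mulr0 ?mulr1 ?subr0.
have tM : twoHighA r 0 ord_max = -2.
  rewrite ct eqxx.
  have -> : (ord_max == ord0 :> 'I_r.+1) = false by rewrite -val_eqE /=; move: r0; rewrite lt0n => /negbTE.
  by rewrite mulr0 mulr1 sub0r.
split.
- move=> E; split.
    by move=> k; rewrite -cW -tW E.
  by have := cM; rewrite E tM => /eqP; rewrite eqr_opp => /eqP [].
- move=> [E1 E2]; apply/rowP => j; case: (unliftP ord_max j) => [k ->|->].
    by rewrite cW tW E1.
  by rewrite cM tM E2.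
Qed.

Definition qC r (N : nat * 'I_r * 'I_r -> nat) (k : 'I_r) : nat :=
  (2 * N (2%N, k, k) + (\sum_(j < r | (k < j)%N) N (1%N, k, j)
                       + \sum_(i < r | (i < k)%N) N (1%N, i, k)))%N.

Definition EqC r (N : nat * 'I_r * 'I_r -> nat) : Prop :=
  forall k : 'I_r,
    \sum_(j < r | (k < j)%N) (N (0%N, k, j))%:Z - \sum_(i < r | (i < k)%N) (N (0%N, i, k))%:Z
      + (qC N k)%:Z = (if val k == 0%N then 2 else 0).

Lemma SC_coord s (N : nat * 'I_s.+1 * 'I_s.+1 -> nat) :
  (\sum_(i < s.+1) \sum_(j < s.+1 | (i < j)%N) (N (0%N, i, j))%:Z *: (eps i - eps j) +
   (\sum_(i < s.+1) \sum_(j < s.+1 | (i < j)%N) (N (1%N, i, j))%:Z *: (eps i + eps j) +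
    \sum_(i < s.+1) (N (2%N, i, i))%:Z *: (2%:Z *: eps i)) = highC s.+1) <-> EqC N.
Proof.
have cq : forall k, (qC N k)%:Z = 2 * (N (2%N, k, k))%:Z +
   (\sum_(j < s.+1 | (k < j)%N) (N (1%N, k, j))%:Z + \sum_(i < s.+1 | (i < k)%N) (N (1%N, i, k))%:Z).
  by move=> k; rewrite /qC PoszD PoszM PoszD !sumz.
have ch : forall k : 'I_s.+1, highC s.+1 0 k = if val k == 0%N then 2 else 0.
  by move=> k; rewrite /= !mxE eqxx /=; case: k => [[|k] hk] //=; rewrite mulr0.
split.
- move=> E k; have := congr1 (fun v : vec s.+1 => v 0 k) E.
  rewrite ch !mxE coord_minus coord_plus coord_dbl cq => <-; lia.
- move=> E; apply/rowP => k.
  rewrite ch !mxE coord_minus coord_plus coord_dbl -E cq; lia.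
Qed.

Lemma sumEq s (c : 'I_s.+1 -> 'I_s.+1 -> int) (q : 'I_s.+1 -> int) :
  (forall k : 'I_s.+1, \sum_(j < s.+1 | (k < j)%N) c k j - \sum_(i < s.+1 | (i < k)%N) c i k + q k
     = if val k == 0%N then 2 else 0) -> \sum_(k < s.+1) q k = 2.
Proof.
move=> E.
have S : \sum_(k < s.+1) (\sum_(j < s.+1 | (k < j)%N) c k j - \sum_(i < s.+1 | (i < k)%N) c i k + q k)
   = \sum_(k < s.+1) (if val k == 0%N then 2 else 0 : int) by apply: eq_bigr => k _; exact: E.
rewrite big_split sumrB /= [X in _ - X + _](exchange_big_dep xpredT) //= subrr add0r in S.
by rewrite S big_ord_recl /= big1 ?addr0.
Qed.

Lemma boundA n (M : 'I_n * 'I_n -> nat) (t : 'I_n -> int) :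
  (forall k : 'I_n, \sum_(j < n | (k < j)%N) (M (k, j))%:Z - \sum_(i < n | (i < k)%N) (M (i, k))%:Z = t k) ->
  forall i j : 'I_n, (i < j)%N -> (M (i, j) <= absz (- \sum_(k < n) (val k)%:Z * t k))%N.
Proof.
move=> E i j hij.
have e : - \sum_(k < n) (val k)%:Z * t k =
         \sum_(a < n) \sum_(b < n | (a < b)%N) (M (a, b))%:Z * ((val b)%:Z - (val a)%:Z).
  under eq_bigr => k _ do rewrite -E mulrBr !mulr_sumr.
  rewrite sumrB [X in - (_ - X)](exchange_big_dep xpredT) //= opprB.
  rewrite -sumrB; apply: eq_bigr => a _; rewrite -sumrB; apply: eq_bigr => b _.
  by rewrite mulrBr [_ * (val b)%:Z]mulrC [(val a)%:Z * _]mulrC.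
have pos : forall a b : 'I_n, (a < b)%N -> 0 <= (M (a, b))%:Z * ((val b)%:Z - (val a)%:Z).
  move=> a b hab; apply: mulr_ge0 => //; rewrite subr_ge0 lez_nat; exact: ltnW.
have le1 : (M (i, j))%:Z <= - \sum_(k < n) (val k)%:Z * t k.
  rewrite e (bigD1 i) //= (bigD1 j hij) /= -addrA.
  apply: le_trans (_ : (M (i, j))%:Z * ((val j)%:Z - (val i)%:Z) <= _).
    rewrite ler_peMr //; rewrite lerBrDr -PoszD lez_nat add1n; exact: hij.
  rewrite lerDl; apply: addr_ge0.
    by apply: sumr_ge0 => b /andP [hb _]; apply: pos.
  apply: sumr_ge0 => a _; apply: sumr_ge0 => b hab; exact: pos.
have ge0 : 0 <= - \sum_(k < n) (val k)%:Z * t k by apply: le_trans le1.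
by rewrite -lez_nat gez0_abs.
Qed.

Definition PA r (M : 'I_r.+1 * 'I_r.+1 -> nat) (k : 'I_r) : nat := M (W k, ord_max).

Definition FC r (M : 'I_r.+1 * 'I_r.+1 -> nat) (x : nat * 'I_r * 'I_r) : nat :=
  let: (t, i, j) := x in
  if t == 0%N then M (W i, W j)
  else if t == 1%N then ((PA M i == 1%N) && (PA M j == 1%N) : nat)
  else (PA M i == 2%N : nat).

Definition GA r (N : nat * 'I_r * 'I_r -> nat) (x : 'I_r.+1 * 'I_r.+1) : nat :=
  let: (i, j) := x in
  match unlift ord_max i, unlift ord_max j with
  | Some i', Some j' => N (0%N, i', j')
  | Some i', None => qC N i'
  | _, _ => 0%N
  end.

Lemma W_lt r (i j : 'I_r) : (W i < W j)%N = (i < j)%N.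
Proof. by rewrite /= !bumpW. Qed.

Lemma W_max r (i : 'I_r) : (W i < @ord_max r)%N.
Proof. by rewrite /= bumpW ltn_ord. Qed.

Lemma unlift_W r (i : 'I_r) : unlift ord_max (W i) = Some i.
Proof. exact: liftK. Qed.

Lemma qC_FC r (N : nat * 'I_r * 'I_r -> nat) (M : 'I_r.+1 * 'I_r.+1 -> nat) :
  (forall x, x \in csC r -> N x = FC M x) -> forall k, qC N k = qP (PA M) k.
Proof.
move=> NF k; rewrite /qC /qP NF ?mem_csC2 //=.
congr (_ + (_ + _))%N; apply: eq_bigr.
  by move=> j hj; rewrite NF ?mem_csC1.
by move=> i hi; rewrite NF ?mem_csC1.
Qed.

Lemma main_s s : exists k : nat,
  Kostant_is (PhiA s.+1) (twoHighA s.+1) k /\ Kostant_is (PhiC s.+1) (highC s.+1) k.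
Proof.
pose xA : 'I_s.+2 * 'I_s.+2 := (ord0, ord0).
pose xC : nat * 'I_s.+1 * 'I_s.+1 := (0%N, ord0, ord0).
have eA := PhiA_map s.+1; have uA := uniq_csA s.+1.
have eC := PhiC_map s.+1; have uC := uniq_csC s.+1.
have SAe : forall mA : {ffun 'I_(size (PhiA s.+1)) -> nat},
    \sum_(i < size (PhiA s.+1)) (mA i)%:Z *: (PhiA s.+1)`_i = twoHighA s.+1 <->
    EqA (rd (csA s.+1) mA).
  by move=> mA; rewrite (sum_rd xA eA uA) sum_csA; apply: SA_coord.
have SAv : forall mA : {ffun 'I_(size (PhiA s.+1)) -> nat},
    \sum_(i < size (PhiA s.+1)) (mA i)%:Z *: (PhiA s.+1)`_i = twoHighA s.+1 ->
    \sum_(i < s.+2) \sum_(j < s.+2 | (i < j)%N) (rd (csA s.+1) mA (i, j))%:Z *: (eps i - eps j)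
      = twoHighA s.+1.
  by move=> mA; rewrite (sum_rd xA eA uA) sum_csA.
have SCe : forall mC : {ffun 'I_(size (PhiC s.+1)) -> nat},
    \sum_(i < size (PhiC s.+1)) (mC i)%:Z *: (PhiC s.+1)`_i = highC s.+1 <->
    EqC (rd (csC s.+1) mC).
  by move=> mC; rewrite (sum_rd xC eC uC) sum_csC; apply: SC_coord.
have [k Hk] : exists k, Kostant_is (PhiA s.+1) (twoHighA s.+1) k.
  apply: (fin_bound (B := (absz (- \sum_(k < s.+2) (val k)%:Z * twoHighA s.+1 0 k)).+1)).
  move=> mA /SAv E p; rewrite ltnS -(rd_nth xA eA uA).
  have : nth xA (csA s.+1) p \in csA s.+1 by apply: mem_nth; rewrite -(size_map (@HA s.+1)) -eA ltn_ord.
  case: (nth xA (csA s.+1) p) => i j; rewrite mem_csA => hij.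
  apply: (boundA (M := rd (csA s.+1) mA)) => // k'.
  by rewrite -(coord_minus (fun a b => (rd (csA s.+1) mA (a, b))%:Z)) E.
exists k; split=> //.
pose f (mA : {ffun 'I_(size (PhiA s.+1)) -> nat}) : {ffun 'I_(size (PhiC s.+1)) -> nat} :=
  [ffun p : 'I_(size (PhiC s.+1)) => FC (rd (csA s.+1) mA) (nth xC (csC s.+1) p)].
pose g (mC : {ffun 'I_(size (PhiC s.+1)) -> nat}) : {ffun 'I_(size (PhiA s.+1)) -> nat} :=
  [ffun p : 'I_(size (PhiA s.+1)) => GA (rd (csC s.+1) mC) (nth xA (csA s.+1) p)].
have rdf : forall mA x, x \in csC s.+1 -> rd (csC s.+1) (f mA) x = FC (rd (csA s.+1) mA) x.
  by move=> mA x hx; rewrite (rd_ffun xC eC).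
have rdg : forall mC x, x \in csA s.+1 -> rd (csA s.+1) (g mC) x = GA (rd (csC s.+1) mC) x.
  by move=> mC x hx; rewrite (rd_ffun xA eA).
have qf : forall mA k, qC (rd (csC s.+1) (f mA)) k = qP (PA (rd (csA s.+1) mA)) k.
  by move=> mA; apply: qC_FC => x hx; rewrite rdf.
have sumq : forall mC : {ffun 'I_(size (PhiC s.+1)) -> nat}, EqC (rd (csC s.+1) mC) -> (\sum_(k < s.+1) qC (rd (csC s.+1) mC) k = 2)%N.
  move=> mC E.
  have H := sumEq (c := fun a b => (rd (csC s.+1) mC (0%N, a, b))%:Z)
                  (q := fun k => (qC (rd (csC s.+1) mC) k)%:Z) E.
  by move: H; rewrite -sumz => -[].
apply: (has_card_transfer (f := f) (g := g) Hk).
- move=> mA /SAe [E1 E2]; apply/SCe => k'.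
  rewrite qf K1 //.
  rewrite -[RHS](E1 k'); congr (_ - _ + _).
  + by apply: eq_bigr => j hj; rewrite rdf ?mem_csC0.
  + by apply: eq_bigr => i hi; rewrite rdf ?mem_csC0.
- move=> mC /SCe E; apply/SAe; split.
  + move=> k'; rewrite -[RHS](E k') rdg ?mem_csA ?W_max // /GA unlift_W unlift_none.
    congr (_ - _ + _).
    * by apply: eq_bigr => j hj; rewrite rdg ?mem_csA ?W_lt // /GA !unlift_W.
    * by apply: eq_bigr => i hi; rewrite rdg ?mem_csA ?W_lt // /GA !unlift_W.
  + rewrite -(sumq mC E); apply: eq_bigr => k' _.
    by rewrite rdg ?mem_csA ?W_max // /GA unlift_W unlift_none.
- move=> mA /SAe [E1 E2]; apply: (rd_ext xA eA uA) => x.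
  case: x => i j; rewrite mem_csA => hij; rewrite rdg ?mem_csA //=.
  case: unliftP => [i' ei|ei]; last by rewrite ei ltnNge leq_ord in hij.
  case: unliftP => [j' ej|ej].
    rewrite rdf ?mem_csC0 //=; first by rewrite ei ej.
    by rewrite -W_lt -ei -ej.
  by rewrite qf K1 // ei ej.
- move=> mC /SCe E; apply: (rd_ext xC eC uC) => x.
  case/mem_csCP => [[i [j [hij ->]]]|[i [j [hij ->]]]|[i ->]];
    rewrite rdf ?mem_csC0 ?mem_csC1 ?mem_csC2 //=.
  + by rewrite rdg ?mem_csA ?W_lt // /GA !unlift_W.
  + rewrite /PA !rdg ?mem_csA ?W_max // /GA !unlift_W !unlift_none.
    by case: (K2 (sumq mC E)) => H1 _; apply: H1.
  + rewrite /PA !rdg ?mem_csA ?W_max // /GA !unlift_W !unlift_none.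
    by case: (K2 (sumq mC E)) => _ H2; apply: H2.
Qed.

Theorem mainTheorem15 (r : nat) (hr : (3 <= r)%N) :
  exists k : nat, Kostant_is (PhiA r) (twoHighA r) k /\ Kostant_is (PhiC r) (highC r) k.
Proof.
case: r hr => [//|s] _; exact: main_s.
Qed.
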